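(* Let $n\ge 1$ and $L\ge 1$. For each $i=1,\dots,n$ let $\Phi_i$ be a network of the form $\Phi_i(\mathbf{e})=\mathbf{W}_i^{L}\,\sigma(\mathbf{W}_i^{L-1}(\cdots\sigma(\mathbf{W}_i^{1}\mathbf{e})))$, where each $\sigma$ is applied elementwise and is either $\sin(\cdot)$ or $\texttt{ReLU}(\cdot)$, and where the input $\mathbf{e}$ is a coordinate in an arbitrary spectral coordinate system (e.g. a truncated Laplacian eigenvector embedding of a graph node). Define the factorized model $$\Phi(\mathbf{e}_1,\dots,\mathbf{e}_n)=\mathcal{M}\times_1\Phi_1(\mathbf{e}_1)\times_2\Phi_2(\mathbf{e}_2)\cdots\times_n\Phi_n(\mathbf{e}_n),$$ where $\mathcal{M}$ is a core tensor of compatible size and $\times_k$ is the mode-$k$ tensor–vector product. Assume that the $\ell_1$ norm of every weight matrix $\mathbf{W}_i^{(\ell)}$ is bounded by $\xi$ and the $\ell_1$ norm of $\mathcal{M}$ is bounded by $\eta$. Let $\delta=\max\{|\mathbf{e}_i| : i=1,\dots,n\}$ (and analogously including primed coordinates where they appear). Then for every $k\in\{1,\dots,n\}$, $$|\Phi(\mathbf{e}_1,\dots,\mathbf{e}_k,\dots,\mathbf{e}_n)-\Phi(\mathbf{e}_1,\dots,\mathbf{e}_k',\dots,\mathbf{e}_n)|\le\eta\,\xi^{nL}\,\delta^{n-1}\,|\mathbf{e}_k-\mathbf{e}_k'|,$$ so $\Phi$ is Lipschitz continuous in each argument of an arbitrary spectral coordinate system.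
   Context: $|\cdot|$ denotes the $\ell_1$ norm (for matrices, the corresponding norm bounding $|\mathbf{W}\mathbf{x}|\le|\mathbf{W}||\mathbf{x}|$). The networks have no bias terms. The mode-$k$ product of a tensor $\mathcal{M}\in\mathbb{R}^{n_1\times\cdots\times n_n}$ with a vector $\mathbf{u}\in\mathbb{R}^{n_k}$ contracts the $k$-th index of $\mathcal{M}$ against $\mathbf{u}$; after all $n$ products the result is a scalar. *)

(* Defs.v *)
From HB Require Import structures.
From mathcomp Require Import all_boot all_order all_algebra.
From mathcomp Require Import reals trigo.
Set Implicit Arguments. Unset Strict Implicit. Unset Printing Implicit Defensive.
Import Order.TTheory GRing.Theory Num.Theory.
Local Open Scope ring_scope.

Inductive act := ASin | AReLU.

Definition actf {R : realType} (a : act) (x : R) : R :=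
  match a with ASin => sin x | AReLU => Num.max 0 x end.

Definition l1v {R : realType} {m : nat} (v : 'cV[R]_m) : R :=
  \sum_(i < m) `|v i 0|.

(* induced l1 operator norm of a matrix (max absolute column sum);
   it satisfies l1v (A *m x) <= l1mx A * l1v x *)
Definition l1mx {R : realType} {m p : nat} (A : 'M[R]_(m, p)) : R :=
  \big[Num.max/0]_(j < p) \sum_(i < m) `|A i j|.

(* Pre-activation of layer l+1 (0-indexed weights: W 0 is W^1):
   netpre 0 = W^1 x,  netpre (l+1) = W^(l+2) sigma_(l+1)(netpre l). *)
Fixpoint netpre {R : realType} (d : nat -> nat)
  (W : forall l : nat, 'M[R]_(d l.+1, d l)) (a : nat -> act)
  (x : 'cV[R]_(d 0%N)) (l : nat) : 'cV[R]_(d l.+1) :=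
  match l return 'cV[R]_(d l.+1) with
  | 0%N => W 0%N *m x
  | l'.+1 => W l'.+1 *m map_mx (actf (a l')) (netpre W a x l')
  end.

Definition net {R : realType} (d : nat -> nat)
  (W : forall l : nat, 'M[R]_(d l.+1, d l)) (a : nat -> act) (L : nat)
  (x : 'cV[R]_(d 0%N)) : 'cV[R]_(d L.-1.+1) :=
  netpre W a x L.-1.

(* Full contraction M x_1 u_1 x_2 u_2 ... x_n u_n of an n-mode tensor
   (tensor = function from multi-indices to R). *)
Definition contract {R : realType} {n : nat} (r : 'I_n -> nat)
  (M : {dffun forall i : 'I_n, 'I_(r i)} -> R)
  (u : forall i : 'I_n, 'cV[R]_(r i)) : R :=
  \sum_(j : {dffun forall i : 'I_n, 'I_(r i)}) (M j * \prod_(i < n) u i (j i) 0).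

Definition l1tensor {R : realType} {n : nat} (r : 'I_n -> nat)
  (M : {dffun forall i : 'I_n, 'I_(r i)} -> R) : R :=
  \sum_(j : {dffun forall i : 'I_n, 'I_(r i)}) `|M j|.

Definition factorized {R : realType} {n : nat} (dims : 'I_n -> nat -> nat)
  (W : forall (i : 'I_n) (l : nat), 'M[R]_(dims i l.+1, dims i l))
  (a : 'I_n -> nat -> act) (L : nat)
  (M : {dffun forall i : 'I_n, 'I_(dims i L.-1.+1)} -> R)
  (e : forall i : 'I_n, 'cV[R]_(dims i 0%N)) : R :=
  contract M (fun i => net (W i) (a i) L (e i)).
Arguments factorized {R n dims} W a L M e.
Arguments net {R d} W a L x.

(* Main.v *)
Require Import Defs.
From HB Require Import structures.
From mathcomp Require Import all_boot all_order all_algebra.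
From mathcomp Require Import reals trigo.
From mathcomp Require Import all_classical topology normedtype derive.
From mathcomp Require Import lra ring.
Import Order.TTheory GRing.Theory Num.Theory.
Import numFieldNormedType.Exports.
Local Open Scope ring_scope.
Set Implicit Arguments. Unset Strict Implicit.

Lemma sin_lip (R : realType) (x y : R) : `|sin x - sin y| <= `|x - y|.
Proof.
wlog le : x y / x <= y.
  move=> H; case: (leP x y) => [/H//|/ltW /H]; by rewrite distrC [`|x - y|]distrC.
have H := @MVT_segment R sin cos x y le (fun z _ => is_derive_sin z).
rewrite distrC [`|x - y|]distrC.
have [|c _ ->] := H.
  by apply/continuous_subspaceT => ?; exact: continuous_sin.
rewrite normrM.
by rewrite ler_piMl // cos_max.
Qed.

Lemma actf_lip (R : realType) a (x y : R) : `|actf a x - actf a y| <= `|x - y|.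
Proof.
case: a => /=; first exact: sin_lip.
have n1 := ler_norm (x - y).
have n2 : - (x - y) <= `|x - y| by rewrite -normrN ler_norm.
by have [hx|hx] := lerP x 0; have [hy|hy] := lerP y 0;
  rewrite ler_norml; apply/andP; split; lra.
Qed.

Lemma actf0 (R : realType) a : actf a (0 : R) = 0.
Proof. by case: a => /=; rewrite ?sin0 ?maxxx. Qed.

Lemma bigmax_ge (R : realType) (I : finType) (F : I -> R) j :
  F j <= \big[Num.max/0]_(i : I) F i.
Proof.
have : j \in index_enum I by rewrite mem_index_enum.
elim: (index_enum I) => //= x s IH; rewrite big_cons in_cons.
case/orP => [/eqP <-|/IH h]; rewrite le_max ?lexx //.
by rewrite h orbT.
Qed.

Lemma bigmax_ge0 (R : realType) (I : finType) (F : I -> R) :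
  0 <= \big[Num.max/0]_(i : I) F i.
Proof.
elim: (index_enum I) => [|x s IH]; rewrite ?big_nil ?big_cons //.
by rewrite le_max IH orbT.
Qed.

Lemma l1v_ge0 (R : realType) m (v : 'cV[R]_m) : 0 <= l1v v.
Proof. by apply: sumr_ge0 => i _. Qed.

Lemma l1mx_ge0 (R : realType) m p (A : 'M[R]_(m, p)) : 0 <= l1mx A.
Proof. exact: bigmax_ge0. Qed.

Lemma l1v_entry (R : realType) m (v : 'cV[R]_m) i : `|v i 0| <= l1v v.
Proof.
by rewrite /l1v (bigD1 i) //= lerDl; apply: sumr_ge0.
Qed.

Lemma l1v_mulmx (R : realType) m p (A : 'M[R]_(m, p)) (x : 'cV[R]_p) :
  l1v (A *m x) <= l1mx A * l1v x.
Proof.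
rewrite /l1v.
apply: (@le_trans _ _ (\sum_(i < m) \sum_(j < p) `|A i j| * `|x j 0|)).
  apply: ler_sum => i _; rewrite mxE.
  apply: le_trans (ler_norm_sum _ _ _) _.
  by apply: ler_sum => j _; rewrite normrM.
rewrite exchange_big /= mulr_sumr; apply: ler_sum => j _.
rewrite -mulr_suml ler_wpM2r //.
rewrite /l1mx; exact: (@bigmax_ge R _ (fun j0 : 'I_p => \sum_(i < m) `|A i j0|) j).
Qed.

Lemma l1v_map (R : realType) m (f : R -> R)
  (hf : forall u v, `|f u - f v| <= `|u - v|) (x y : 'cV[R]_m) :
  l1v (map_mx f x - map_mx f y) <= l1v (x - y).
Proof. by apply: ler_sum => i _; rewrite !mxE. Qed.

Lemma netpre_lip (R : realType) (d : nat -> nat)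
  (W : forall l : nat, 'M[R]_(d l.+1, d l)) (a : nat -> act) (xi : R) l
  (hW : forall l', (l' <= l)%N -> l1mx (W l') <= xi)
  (x y : 'cV[R]_(d 0%N)) :
  l1v (netpre W a x l - netpre W a y l) <= xi ^+ l.+1 * l1v (x - y).
Proof.
have xi0 : 0 <= xi := le_trans (l1mx_ge0 (W 0%N)) (hW 0%N isT).
elim: l hW => [|l IH] hW /=.
  rewrite -mulmxBr expr1; apply: le_trans (l1v_mulmx _ _) _.
  by rewrite ler_wpM2r ?l1v_ge0 ?hW.
rewrite -mulmxBr; apply: le_trans (l1v_mulmx _ _) _.
rewrite exprS -mulrA; apply: ler_pM; rewrite ?l1mx_ge0 ?l1v_ge0 ?hW //.
apply: le_trans (l1v_map (actf_lip (a l)) _ _) _.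
by apply: IH => l' hl'; apply: hW; apply: leqW.
Qed.

Lemma netpre0 (R : realType) (d : nat -> nat)
  (W : forall l : nat, 'M[R]_(d l.+1, d l)) (a : nat -> act) l :
  netpre W a 0 l = 0.
Proof.
elim: l => [|l IH] /=; first by rewrite mulmx0.
rewrite IH (_ : map_mx _ _ = 0) ?mulmx0 //.
by apply/matrixP => i j; rewrite !mxE actf0.
Qed.

Lemma net_lip (R : realType) (d : nat -> nat)
  (W : forall l : nat, 'M[R]_(d l.+1, d l)) (a : nat -> act) (xi : R) L
  (hL : (0 < L)%N)
  (hW : forall l, (l < L)%N -> l1mx (W l) <= xi)
  (x y : 'cV[R]_(d 0%N)) :
  l1v (net W a L x - net W a L y) <= xi ^+ L * l1v (x - y).
Proof.
have E : xi ^+ L.-1.+1 = xi ^+ L by rewrite prednK.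
rewrite /net -E; apply: netpre_lip => l' hl'; apply: hW.
by rewrite -(prednK hL) ltnS.
Qed.

Lemma net_bound (R : realType) (d : nat -> nat)
  (W : forall l : nat, 'M[R]_(d l.+1, d l)) (a : nat -> act) (xi : R) L
  (hL : (0 < L)%N)
  (hW : forall l, (l < L)%N -> l1mx (W l) <= xi)
  (x : 'cV[R]_(d 0%N)) :
  l1v (net W a L x) <= xi ^+ L * l1v x.
Proof.
have := net_lip a hL hW x 0.
by rewrite /net netpre0 !subr0.
Qed.

Unset Implicit Arguments.
Set Strict Implicit.

Theorem lemma5 (R : realType) (n L : nat) (hn : (0 < n)%N) (hL : (0 < L)%N)
  (dims : 'I_n -> nat -> nat)
  (W : forall (i : 'I_n) (l : nat), 'M[R]_(dims i l.+1, dims i l))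
  (a : 'I_n -> nat -> act)
  (M : {dffun forall i : 'I_n, 'I_(dims i L.-1.+1)} -> R)
  (xi eta : R)
  (hW : forall (i : 'I_n) (l : nat), (l < L)%N -> l1mx (W i l) <= xi)
  (hM : l1tensor M <= eta)
  (k : 'I_n) (e e' : forall i : 'I_n, 'cV[R]_(dims i 0%N))
  (he : forall i : 'I_n, i != k -> e i = e' i) :
  let delta := Num.max (\big[Num.max/0]_(i < n) l1v (e i)) (l1v (e' k)) in
  `|factorized W a L M e - factorized W a L M e'|
    <= eta * xi ^+ (n * L) * delta ^+ n.-1 * l1v (e k - e' k).
Proof.
cbv zeta.
set delta := Num.max (\big[Num.max/0]_(i < n) l1v (e i)) (l1v (e' k)).
have xi0 : 0 <= xi := le_trans (l1mx_ge0 (W k 0%N)) (hW k 0%N hL).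
have d0 : 0 <= delta by rewrite le_max bigmax_ge0.
have eta0 : 0 <= eta by apply: le_trans hM; apply: sumr_ge0.
set u := fun i => net (W i) (a i) L (e i).
set u' := fun i => net (W i) (a i) L (e' i).
set D := l1v (e k - e' k).
set C := xi ^+ L * D * (xi ^+ L * delta) ^+ n.-1.
have C0 : 0 <= C.
  by rewrite /C !mulr_ge0 ?exprn_ge0 ?mulr_ge0 ?exprn_ge0 ?l1v_ge0.
have hu : forall i (j : 'I_(dims i L.-1.+1)), `|u i j 0| <= xi ^+ L * delta.
  move=> i j; apply: le_trans (l1v_entry _ _) _.
  apply: le_trans (net_bound _ hL (hW i) _) _.
  rewrite ler_wpM2l ?exprn_ge0 //.
  by rewrite le_max (@bigmax_ge R _ (fun i => l1v (e i)) i).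
have hd : forall (j : 'I_(dims k L.-1.+1)), `|u k j 0 - u' k j 0| <= xi ^+ L * D.
  move=> j; have -> : u k j 0 - u' k j 0 = (u k - u' k) j 0.
    by rewrite !mxE.
  apply: le_trans (l1v_entry _ _) _.
  rewrite /u /u' /D; exact: (net_lip (a k) hL (hW k)).
apply: (@le_trans _ _ (l1tensor M * C)); last first.
  have -> : eta * xi ^+ (n * L) * delta ^+ n.-1 * D = eta * C.
    rewrite /C -{1}(prednK hn) mulSn exprD exprMn -exprM mulnC.
    ring.
  by rewrite ler_wpM2r.
rewrite /factorized /contract -/u -/u' -sumrB /l1tensor mulr_suml.
apply: le_trans (ler_norm_sum _ _ _) _.
apply: ler_sum => j _.
rewrite -mulrBr normrM ler_wpM2l //.
rewrite (bigD1 k) //= [X in _ - X](bigD1 k) //=.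
have -> : \prod_(i < n | i != k) u' i (j i) 0 = \prod_(i < n | i != k) u i (j i) 0.
  by apply: eq_bigr => i hi; rewrite /u /u' he.
rewrite -mulrBl normrM /C; apply: ler_pM; rewrite ?normr_ge0 ?hd //.
rewrite normr_prod.
apply: le_trans (_ : _ <= \prod_(i < n | i != k) (xi ^+ L * delta)) _.
  by apply: ler_prod => i _; rewrite normr_ge0 hu.
rewrite prodr_const.
by rewrite cardC1 card_ord.
Qed.
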